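(* Assume (A), $c_1\ge c_1^F$, that $v$ is differentiable on $[0,\infty)$ (one-sided at $0$) with $v'(0)=0$, and let $t^*:=t^F_{c_2}$. Define the input-rate path (the derivative on $(-t^*,0)$ of the most probable path $f^*(r)=-\frac{\Gamma(-r,t^* )}{v(t^* )}(b+c_2t^* )$) $$g^*(r):=\frac{b+c_2t^*}{2v(t^* )}\big(v'(r+t^* )+v'(-r)\big),\qquad r\in[-t^*,0].$$ Then $g^*(0)=g^*(-t^* )=c_2$.
   Context: $v:[0,\infty)\to[0,\infty)$ is continuous, $v(0)=0$, $\lim_{t\to\infty}v(t)/t^\alpha=0$ for some $\alpha<2$, the variance function of a centered Gaussian process with stationary increments; $\Gamma(s,t):=\tfrac12(v(|s|)+v(|t|)-v(|t-s|))$. Fix $b>0$, $c_1>c_2>0$. $L_c(t):=(b+ct)^2/(2v(t))$; $t^F_{c_2}$ is a minimizer of $L_{c_2}$ over $t>0$; $k(s,t):=\frac{\Gamma(s,t)}{v(t)}(b+c_2t)$; $c_1^F:=\sup_{s\in(0,t^F_{c_2})}k(s,t^F_{c_2})/s$. Assumption (A): $\sqrt v\in C^2([0,\infty))$, strictly increasing and strictly concave. *)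

(* Defs.v *)
From Stdlib Require Import Reals Lra.
From Coquelicot Require Import Coquelicot.
Open Scope R_scope.

Definition nonneg (x : R) : Prop := 0 <= x.

Definition cont_nonneg (f : R -> R) : Prop :=
  forall t, 0 <= t -> filterlim f (within nonneg (locally t)) (locally (f t)).

Definition deriv_nonneg (f f' : R -> R) : Prop :=
  forall t, 0 <= t ->
    filterlim (fun h => (f (t + h) - f t) / h)
      (within (fun h => h <> 0 /\ 0 <= t + h) (locally 0)) (locally (f' t)).

Definition C2_nonneg (f : R -> R) : Prop :=
  exists f1 f2 : R -> R,
    deriv_nonneg f f1 /\ deriv_nonneg f1 f2 /\ cont_nonneg f2.

Definition strict_incr_nonneg (f : R -> R) : Prop :=
  forall s t, 0 <= s -> s < t -> f s < f t.

Definition strict_concave_nonneg (f : R -> R) : Prop :=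
  forall s t l, 0 <= s -> 0 <= t -> s <> t -> 0 < l < 1 ->
    l * f s + (1 - l) * f t < f (l * s + (1 - l) * t).

Definition Gamma (v : R -> R) (s t : R) : R :=
  (v (Rabs s) + v (Rabs t) - v (Rabs (t - s))) / 2.

(* v is the variance function of a centered Gaussian process with stationary
   increments, i.e. Gamma is a covariance kernel (positive semidefinite);
   such a process exists iff this holds (Kolmogorov extension). *)
Definition is_gauss_si_variance (v : R -> R) : Prop :=
  forall (n : nat) (ts a : nat -> R),
    0 <= sum_f_R0 (fun i => sum_f_R0 (fun j => a i * a j * Gamma v (ts i) (ts j)) n) n.

Definition standing_v (v : R -> R) : Prop :=
  cont_nonneg v /\ (forall t, 0 <= t -> 0 <= v t) /\ v 0 = 0 /\
  (exists alpha, alpha < 2 /\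
     is_lim (fun t => v t / Rpower t alpha) p_infty 0) /\
  is_gauss_si_variance v.

Definition assumption_A (v : R -> R) : Prop :=
  let w := fun t => sqrt (v t) in
  C2_nonneg w /\ strict_incr_nonneg w /\ strict_concave_nonneg w.

Definition Lc (v : R -> R) (b c t : R) : R := (b + c * t) ^ 2 / (2 * v t).

Definition is_tF (v : R -> R) (b c t : R) : Prop :=
  0 < t /\ forall s, 0 < s -> Lc v b c t <= Lc v b c s.

Definition kfun (v : R -> R) (b c2 s t : R) : R := Gamma v s t / v t * (b + c2 * t).

Definition c1F (v : R -> R) (b c2 t : R) : Rbar :=
  Lub_Rbar (fun x => exists s, 0 < s < t /\ x = kfun v b c2 s t / s).

Definition gstar (v dv : R -> R) (b c2 t r : R) : R :=
  (b + c2 * t) / (2 * v t) * (dv (r + t) + dv (- r)).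

(* Main.v *)
Require Import Defs.
From Stdlib Require Import Reals Lra.
From Coquelicot Require Import Coquelicot.
Open Scope R_scope.

Lemma deriv_interior (v dv : R -> R) t : 0 < t -> deriv_nonneg v dv ->
  derivable_pt_lim v t (dv t).
Proof.
  intros Ht Hd eps Heps.
  specialize (Hd t (Rlt_le _ _ Ht) (ball (dv t) eps) (locally_ball _ (mkposreal _ Heps))).
  destruct Hd as [d Hd].
  assert (Hm : 0 < Rmin d t) by (apply Rmin_pos; [apply cond_pos|lra]).
  exists (mkposreal _ Hm). intros h Hh0 Hh. simpl in Hh.
  assert (B : ball 0 d h).
  { unfold ball; simpl; unfold AbsRing_ball, abs, minus, plus, opp; simpl.
    replace (h + - 0) with h by ring. apply Rlt_le_trans with (1 := Hh). apply Rmin_l. }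
  specialize (Hd h B).
  assert (P : h <> 0 /\ 0 <= t + h).
  { split; auto. assert (Rabs h < t) by (apply Rlt_le_trans with (1 := Hh); apply Rmin_r).
    apply Rabs_def2 in H. lra. }
  specialize (Hd P). unfold ball in Hd; simpl in Hd; unfold AbsRing_ball, abs, minus, plus, opp in Hd; simpl in Hd.
  exact Hd.
Qed.

Theorem proposition3p13 (v dv : R -> R) (b c1 c2 tstar : R) :
  standing_v v ->
  0 < b -> c2 < c1 -> 0 < c2 ->
  assumption_A v ->
  is_tF v b c2 tstar ->
  Rbar_le (c1F v b c2 tstar) (Finite c1) ->
  deriv_nonneg v dv -> dv 0 = 0 ->
  gstar v dv b c2 tstar 0 = c2 /\ gstar v dv b c2 tstar (- tstar) = c2.
Proof.
  intros [_ [_ [Hv0 _]]] Hb _ Hc2 [_ [Hinc _]] [Ht Hmin] _ Hd Hd0.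
  assert (Hvt : 0 < v tstar).
  { specialize (Hinc 0 tstar (Rle_refl 0) Ht). simpl in Hinc. rewrite Hv0, sqrt_0 in Hinc.
    destruct (Rle_dec (v tstar) 0) as [H|H]; [|lra].
    rewrite (sqrt_neg_0 _ H) in Hinc. lra. }
  assert (Dv := deriv_interior v dv tstar Ht Hd).
  apply is_derive_Reals in Dv.
  assert (D1 : is_derive (fun s => (b + c2 * s) ^ 2) tstar (INR 2 * c2 * (b + c2*tstar) ^ Init.Nat.pred 2)).
  { apply (is_derive_pow (fun s => b + c2 * s)). auto_derive; auto; ring. }
  assert (D2 : is_derive (fun s => 2 * v s) tstar (2 * dv tstar)) by (apply is_derive_scal; exact Dv).
  assert (D := is_derive_div _ _ _ _ _ D1 D2 ltac:(lra)).
  apply is_derive_Reals in D.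
  set (l := ((INR 2 * c2 * (b + c2 * tstar) ^ Init.Nat.pred 2 * (2 * v tstar) -
               (b + c2 * tstar) ^ 2 * (2 * dv tstar)) / (2 * v tstar) ^ 2)) in D.
  assert (Hl : l = 0).
  { change l with (derive_pt (fun s => (b + c2 * s) ^ 2 / (2 * v s)) tstar (exist _ l D)).
    apply (deriv_minimum _ 0 (tstar + 1)); try lra.
    intros x Hx _. apply Hmin. lra. }
  assert (E : c2 * (b + c2 * tstar) * 2 * v tstar = (b + c2 * tstar) * (b + c2*tstar) * dv tstar).
  { assert (Hne : (2 * v tstar) ^ 2 <> 0) by (apply pow_nonzero; lra).
    assert (N : l * (2 * v tstar) ^ 2 = 0) by (rewrite Hl; ring).
    unfold l in N. field_simplify in N; [|lra]. simpl in N. lra. }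
  assert (Hbc : 0 < b + c2 * tstar) by (pose proof (Rmult_lt_0_compat _ _ Hc2 Ht); lra).
  assert (E2 : (b + c2 * tstar) * dv tstar = 2 * c2 * v tstar).
  { apply Rmult_eq_reg_l with (b + c2 * tstar); nra. }
  unfold gstar. split.
  - replace (0 + tstar) with tstar by ring. replace (- 0) with 0 by ring. rewrite Hd0.
    replace ((b + c2 * tstar) / (2 * v tstar) * (dv tstar + 0)) with ((b + c2 * tstar) * dv tstar / (2 * v tstar)) by (field; lra).
    rewrite E2. field. lra.
  - replace (- tstar + tstar) with 0 by ring. rewrite Ropp_involutive, Hd0.
    replace ((b + c2 * tstar) / (2 * v tstar) * (0 + dv tstar)) with ((b + c2 * tstar) * dv tstar / (2 * v tstar)) by (field; lra).
    rewrite E2. field. lra.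
Qed.
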